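(* Let $A \in \mathbb{R}^{m \times r}$, $b \in \mathbb{R}^m$, let $P = \{ x \in \mathbb{R}^r \mid Ax \ge b\}$ be a polyhedron and $C^r = \{ x \in \mathbb{R}^r \mid Ax \ge 0\}$ its recession cone. Every vector $x \in P$ is a conformal sum of elementary vectors of $P$; that is, there exist finite sets $E_0 \subseteq C^r$ and $E_1 \subseteq P$ of elementary vectors of $P$ such that \[ x = \sum_{e \in E_0} e + \sum_{e \in E_1} \lambda_e e \quad \text{with } \operatorname{sign}(e) \le \operatorname{sign}(x) \text{ for all } e \in E_0 \cup E_1, \] $\lambda_e \ge 0$, and $\sum_{e \in E_1} \lambda_e = 1$ (hence $|E_1| \ge 1$). The set $E = E_0 \cup E_1$ can be chosen such that $|E| \le \dim(P) + 1$ and $|E| \le |\operatorname{supp}(x)| + |\operatorname{supp}(Ax)| + 1$.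
   Context: For $x \in \mathbb{R}^n$, $\operatorname{supp}(x) = \{ i \mid x_i \neq 0\}$, and $\operatorname{sign}(x) \in \{-,0,+\}^n$ is obtained by applying the sign function componentwise. The relations $0 < -$ and $0 < +$ induce a componentwise partial order on $\{-,0,+\}^n$ ($-$ and $+$ incomparable). $\dim(P)$ is the dimension of the affine hull of $P$. A nonzero $x \in C^r$ is conformally non-decomposable (cND) if for all nonzero $x^1,x^2 \in C^r$ with $\operatorname{sign}(x^1),\operatorname{sign}(x^2) \le \operatorname{sign}(x)$, $x = x^1 + x^2$ implies $x^1 = \lambda x^2$ for some $\lambda > 0$. A vector $x \in P$ is convex-conformally non-decomposable (ccND) if for all $x^1,x^2 \in P$ with $\operatorname{sign}(x^1),\operatorname{sign}(x^2) \le \operatorname{sign}(x)$ and all $0<\lambda<1$, $x = \lambda x^1 + (1-\lambda) x^2$ implies $x^1 = x^2$. A vector $e \in C^r \cup P$ is an elementary vector of $P$ if either $e \in C^r$ is cND or $e \in P$ is ccND. *)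

(* Defs.v *)
From HB Require Import structures.
From mathcomp Require Import all_boot all_order all_algebra.
Set Implicit Arguments. Unset Strict Implicit. Unset Printing Implicit Defensive.
Import Order.TTheory GRing.Theory Num.Theory.
Local Open Scope ring_scope.

Section Defs.
Variable R : realFieldType.

Definition vge (n : nat) (u v : 'cV[R]_n) : Prop := forall i, v i 0 <= u i 0.

Definition in_polyhedron (m r : nat) (A : 'M[R]_(m, r)) (b : 'cV[R]_m) (x : 'cV[R]_r) : Prop :=
  vge (A *m x) b.

Definition rcone (m r : nat) (A : 'M[R]_(m, r)) (x : 'cV[R]_r) : Prop :=
  vge (A *m x) 0.

(* sign(y) <= sign(x) in {-,0,+}^n with 0 < -, 0 < + *)
Definition sign_le (n : nat) (y x : 'cV[R]_n) : Prop :=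
  forall i, Num.sg (y i 0) = 0 \/ Num.sg (y i 0) = Num.sg (x i 0).

Definition supp (n : nat) (x : 'cV[R]_n) : {set 'I_n} := [set i | x i 0 != 0].

Definition cND (m r : nat) (A : 'M[R]_(m, r)) (x : 'cV[R]_r) : Prop :=
  rcone A x /\ x != 0 /\
  forall x1 x2 : 'cV[R]_r, rcone A x1 -> rcone A x2 -> x1 != 0 -> x2 != 0 ->
    sign_le x1 x -> sign_le x2 x -> x = x1 + x2 ->
    exists2 l : R, 0 < l & x1 = l *: x2.

Definition ccND (m r : nat) (A : 'M[R]_(m, r)) (b : 'cV[R]_m) (x : 'cV[R]_r) : Prop :=
  in_polyhedron A b x /\
  forall (x1 x2 : 'cV[R]_r) (l : R), in_polyhedron A b x1 -> in_polyhedron A b x2 ->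
    sign_le x1 x -> sign_le x2 x -> 0 < l -> l < 1 ->
    x = l *: x1 + (1 - l) *: x2 -> x1 = x2.

Definition elementary (m r : nat) (A : 'M[R]_(m, r)) (b : 'cV[R]_m) (e : 'cV[R]_r) : Prop :=
  cND A e \/ ccND A b e.

(* dim(P) = dimension of the affine hull of S, i.e. the dimension of the
   linear span of {p - q | p, q in S}: d is the maximal rank of a finite
   family of such differences. *)
Definition affdim (r : nat) (S : 'cV[R]_r -> Prop) (d : nat) : Prop :=
  (exists k (u v : 'I_k -> 'cV[R]_r),
      (forall i, S (u i) /\ S (v i)) /\
      \rank (\matrix_(i < k) (u i - v i)^T) = d) /\
  (forall k (u v : 'I_k -> 'cV[R]_r),
      (forall i, S (u i) /\ S (v i)) ->
      (\rank (\matrix_(i < k) (u i - v i)^T) <= d)%N).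

End Defs.

(* Main.v *)
Require Import Defs.
From HB Require Import structures.
From mathcomp Require Import all_boot all_order all_algebra.
From Stdlib Require Import Classical.
From mathcomp Require Import lra zify.
Set Implicit Arguments. Unset Strict Implicit. Unset Printing Implicit Defensive.
Import Order.TTheory GRing.Theory Num.Theory.
Local Open Scope ring_scope.

Lemma finmin (R : realFieldType) (I : finType) (P : pred I) (F : I -> R) i0 :
  P i0 -> exists2 i, P i & forall j, P j -> F i <= F j.
Proof. by move=> Pi0; case: (@arg_minP _ _ _ i0 P F) => // i Pi Hi; exists i. Qed.

Definition ev (R : realFieldType) n (I : finType) (f : I -> 'rV[R]_n) i (z : 'cV[R]_n) : R :=
  (f i *m z) 0 0.
Definition inK (R : realFieldType) n (I : finType) (f : I -> 'rV[R]_n) (z : 'cV[R]_n) :=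
  forall i, 0 <= ev f i z.
Definition nzs (R : realFieldType) n (I : finType) (f : I -> 'rV[R]_n) (z : 'cV[R]_n) :=
  [set i | ev f i z != 0].
Definition extreme (R : realFieldType) n (I : finType) (f : I -> 'rV[R]_n) (z : 'cV[R]_n) :=
  inK f z /\ z != 0 /\ forall a b, inK f a -> inK f b -> z = a + b -> exists al, a = al *: z.

Lemma evD (R : realFieldType) n (I : finType) (f : I -> 'rV[R]_n) i a b :
  ev f i (a + b) = ev f i a + ev f i b.
Proof. by rewrite /ev mulmxDr mxE. Qed.
Lemma evN (R : realFieldType) n (I : finType) (f : I -> 'rV[R]_n) i a :
  ev f i (- a) = - ev f i a.
Proof. by rewrite /ev mulmxN mxE. Qed.
Lemma evB (R : realFieldType) n (I : finType) (f : I -> 'rV[R]_n) i a b :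
  ev f i (a - b) = ev f i a - ev f i b.
Proof. by rewrite evD evN. Qed.
Lemma evZ (R : realFieldType) n (I : finType) (f : I -> 'rV[R]_n) i al a :
  ev f i (al *: a) = al * ev f i a.
Proof. by rewrite /ev -scalemxAr mxE. Qed.

Lemma step (R : realFieldType) n (I : finType) (f : I -> 'rV[R]_n) z v :
  inK f z -> (forall i, ev f i z = 0 -> ev f i v = 0) -> (exists i, 0 < ev f i v) ->
  exists s, exists ks, 0 < s /\ inK f (z - s *: v) /\ ev f ks (z - s *: v) = 0 /\
    0 < ev f ks v /\ (forall i, ev f i z = 0 -> ev f i (z - s *: v) = 0) /\
    (#|nzs f (z - s *: v)| < #|nzs f z|)%N.
Proof.
move=> Kz tv [i0 Hi0].
have [ks Pis Mis] := finmin (fun i => ev f i z / ev f i v) (P := fun i => 0 < ev f i v) Hi0.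
have vpos : 0 < ev f ks v by [].
have zpos : 0 < ev f ks z.
  rewrite lt_neqAle Kz andbT; apply/eqP => /esym /tv; move: vpos; rewrite lt_neqAle => /andP[/eqP+ _].
  by move=> h h'; apply: h; rewrite h'.
set s := ev f ks z / ev f ks v.
have spos : 0 < s by rewrite divr_gt0.
have tight : forall i, ev f i z = 0 -> ev f i (z - s *: v) = 0.
  by move=> i Hi; rewrite evB evZ Hi (tv _ Hi) mulr0 subr0.
have zis : ev f ks (z - s *: v) = 0.
  by rewrite evB evZ /s divfK ?subrr // gt_eqF.
exists s, ks; split => //; split.
  move=> i; rewrite evB evZ subr_ge0.
  case: (ltP 0 (ev f i v)) => hv.
    by rewrite -ler_pdivlMr // Mis.
  by apply: le_trans (Kz i); rewrite pmulr_rle0.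
do 3 (split => //).
apply: proper_card; rewrite properE; apply/andP; split.
  apply/subsetP => i; rewrite !inE; apply: contraNN => /eqP h; apply/eqP; exact: tight.
apply/subsetPn; exists ks; rewrite !inE ?zis ?eqxx //. by rewrite gt_eqF.
Qed.

Lemma colv1 (R : realFieldType) n (v : 'cV[R]_n) (j : 'I_1) : col j v = v.
Proof. by apply/matrixP => i j'; rewrite !mxE !ord1. Qed.

Lemma mul1c (R : realFieldType) n (v : 'cV[R]_n) (c : 'cV[R]_1) : v *m c = c 0 0 *: v.
Proof. by rewrite {1}(mx11_scalar c) mul_mx_scalar. Qed.

Definition pointed (R : realFieldType) n (I : finType) (f : I -> 'rV[R]_n) :=
  forall z, inK f z -> (forall i, ev f i z = 0) -> z = 0.

Lemma posdir (R : realFieldType) n (I : finType) (f : I -> 'rV[R]_n) v :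
  pointed f -> inK f v -> v != 0 -> exists i, 0 < ev f i v.
Proof.
move=> pt Kv nv; apply: NNPP => H; move/eqP: nv; apply; apply: pt => // i.
apply/le_anti; rewrite Kv andbT; case: (ltP 0 (ev f i v)) => // h.
by exfalso; apply: H; exists i.
Qed.

Lemma inKZ (R : realFieldType) n (I : finType) (f : I -> 'rV[R]_n) al v :
  0 <= al -> inK f v -> inK f (al *: v).
Proof. by move=> h Kv i; rewrite evZ mulr_ge0. Qed.

Lemma inKD (R : realFieldType) n (I : finType) (f : I -> 'rV[R]_n) u v :
  inK f u -> inK f v -> inK f (u + v).
Proof. by move=> Ku Kv i; rewrite evD addr_ge0. Qed.

Lemma extremeZ (R : realFieldType) n (I : finType) (f : I -> 'rV[R]_n) al v :
  0 < al -> extreme f v -> extreme f (al *: v).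
Proof.
move=> alp [Kv [nv ext]]; split; first by apply: inKZ => //; apply: ltW.
split; first by rewrite scaler_eq0 negb_or gt_eqF.
move=> a b Ka Kb e.
have [be hbe] : exists be, al^-1 *: a = be *: v.
  apply: (ext _ (al^-1 *: b)); try (apply: inKZ => //; rewrite invr_ge0 ltW //).
  by rewrite -scalerDr -e scalerA mulVf ?gt_eqF // scale1r.
exists be; rewrite scalerA mulrC -scalerA -hbe scalerA mulfV ?gt_eqF ?scale1r //; exact: gt_eqF.
Qed.

Definition decomp (R : realFieldType) n (I : finType) (f : I -> 'rV[R]_n)
  (Nrm : 'cV[R]_n -> Prop) (z : 'cV[R]_n) :=
  exists k (M : 'M[R]_(n,k)) (c : 'cV[R]_k),
    (forall j, extreme f (col j M) /\ Nrm (col j M)) /\ (forall j, 0 < c j 0) /\ z = M *m c /\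
    (forall c' : 'cV[R]_k, M *m c' = 0 -> c' = 0) /\
    (forall i, ev f i z = 0 -> forall j, ev f i (col j M) = 0).

Lemma decomp0 (R : realFieldType) n (I : finType) (f : I -> 'rV[R]_n) Nrm :
  decomp f Nrm 0.
Proof.
exists 0%N, 0, 0; split; first by case.
split; first by case.
split; first by rewrite mulmx0.
split; last by move=> i _; case.
by move=> c' _; apply/matrixP => -[].
Qed.

Lemma decomp_ext (R : realFieldType) n (I : finType) (f : I -> 'rV[R]_n) Nrm z :
  (forall v, extreme f v -> exists2 al, 0 < al & Nrm (al *: v)) ->
  extreme f z -> decomp f Nrm z.
Proof.
move=> nrm ez; have [al alp Nz] := nrm _ ez.
have [Kz [nz _]] := ez.
exists 1%N, (al *: z), (const_mx al^-1); split.
  move=> j; have -> : col j (al *: z) = al *: z by apply: colv1.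
  by split => //; apply: extremeZ.
split; first by move=> j; rewrite mxE invr_gt0.
split; first by rewrite mul1c mxE scalerA mulVf ?gt_eqF // scale1r.
split.
  move=> c'; rewrite mul1c => /eqP; rewrite !scaler_eq0 (negbTE nz) (gt_eqF alp) /= orbF => /eqP h.
  by apply/matrixP => i j; rewrite !ord1 h mxE.
move=> i hi j; have -> : col j (al *: z) = al *: z by apply: colv1.
by rewrite evZ hi mulr0.
Qed.

Lemma evcol (R : realFieldType) n k (I : finType) (f : I -> 'rV[R]_n) i (M : 'M[R]_(n, k)) j :
  ev f i (col j M) = (f i *m M) 0 j.
Proof. by rewrite /ev colE mulmxA -colE mxE. Qed.

Lemma evM0 (R : realFieldType) n k (I : finType) (f : I -> 'rV[R]_n) i (M : 'M[R]_(n, k)) c :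
  (forall j, ev f i (col j M) = 0) -> ev f i (M *m c) = 0.
Proof. by move=> h; rewrite /ev mulmxA mxE big1 // => j _; rewrite -evcol h mul0r. Qed.

Lemma core (R : realFieldType) n (I : finType) (f : I -> 'rV[R]_n) Nrm :
  pointed f -> (forall v, extreme f v -> exists2 al, 0 < al & Nrm (al *: v)) ->
  forall z, inK f z -> decomp f Nrm z.
Proof.
move=> pt nrm.
suff H : forall N z, (#|nzs f z| <= N)%N -> inK f z -> decomp f Nrm z.
  by move=> z Kz; apply: (H _ z (leqnn _)).
elim=> [|N IH] z hN Kz.
  have h0 : nzs f z = set0 by apply/eqP; rewrite -cards_eq0 -leqn0.
  suff -> : z = 0 by apply: decomp0.
  apply: pt => // i; have := in_set0 i; rewrite -h0 inE => /negbFE/eqP.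
  done.
case: (eqVneq z 0) => [->|nz]; first by apply: decomp0.
case: (classic (extreme f z)) => [ez|next]; first by apply: decomp_ext.
have [a [b [Ka [Kb [zab na]]]]] : exists a b, inK f a /\ inK f b /\ z = a + b /\ forall al, a != al *: z.
  apply: NNPP => H; apply: next; split => //; split => // a b Ka Kb zab.
  apply: NNPP => H2; apply: H; exists a, b; do 3 (split => //).
  by move=> al; apply/eqP => e; apply: H2; exists al.
have ta : forall i, ev f i z = 0 -> ev f i a = 0.
  move=> i; rewrite zab evD => /eqP; rewrite (paddr_eq0 (Ka i) (Kb i)).
  by case/andP => /eqP.
have na0 : a != 0 by have := na 0; rewrite scale0r.
have [s [ks [sp [Ku [_ [_ [tu mu]]]]]]] := step Kz ta (posdir pt Ka na0).
have nu : z - s *: a != 0.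
  apply/eqP => /subr0_eq h; have := na s^-1; rewrite h scalerA mulVf ?gt_eqF // scale1r.
  by rewrite eqxx.
have hu : (#|nzs f (z - s *: a)| <= N)%N by rewrite -ltnS (leq_trans mu hN).
have [ku [Mu [cu [colu [cup [ue [keru tightu]]]]]]] := IH _ hu Ku.
case: ku Mu cu colu cup ue keru tightu => [|ku] Mu cu colu cup ue keru tightu.
  by exfalso; move: nu; rewrite ue [cu]flatmx0 mulmx0 eqxx.
set e := col 0 Mu.
have [ee Ne] := colu 0.
have te : forall i, ev f i z = 0 -> ev f i e = 0.
  by move=> i hi; apply: tightu; apply: tu.
have [Ke [ne _]] := ee.
have [s' [ks' [sp' [Kz' [z'0 [epos [tz' mz']]]]]]] := step Kz te (posdir pt Ke ne).
have hz' : (#|nzs f (z - s' *: e)| <= N)%N by rewrite -ltnS (leq_trans mz' hN).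
have [k' [M' [c' [colM' [cp' [z'e [ker' tight']]]]]]] := IH _ hz' Kz'.
exists (1 + k')%N, (row_mx e M'), (col_mx (const_mx s') c').
split.
  move=> j; rewrite -(splitK j); case: (split j) => j' /=.
    by rewrite colKl colv1.
  by rewrite colKr.
split.
  move=> j; rewrite -(splitK j); case: (split j) => j' /=.
    by rewrite col_mxEu mxE.
  by rewrite col_mxEd.
split.
  by rewrite mul_row_col mul1c mxE -z'e addrC subrK.
split.
  move=> c'' h; rewrite -[c'']vsubmxK in h *; rewrite mul_row_col in h.
  have h1 : ev f ks' (M' *m dsubmx c'') = 0.
    by apply: evM0 => j; apply: tight'.
  have h2 : usubmx c'' = 0.
    have := congr1 (ev f ks') h; rewrite evD h1 addr0 mul1c evZ.
    have -> : ev f ks' 0 = 0 by rewrite /ev mulmx0 mxE.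
    move/eqP; rewrite mulf_eq0 (gt_eqF epos) orbF => /eqP h3.
    by apply/matrixP => i j; rewrite !ord1 h3 mxE.
  move: h; rewrite h2 mulmx0 add0r => /ker' ->.
  by rewrite col_mx0.
move=> i hi j; rewrite -(splitK j); case: (split j) => j' /=.
  by rewrite colKl colv1; apply: te.
by rewrite colKr; apply: tight'; apply: tz'.
Qed.

Definition d1 (R : realFieldType) r (x : 'cV[R]_r) i : R := if 0 <= x i 0 then 1 else -1.
Definition d2 (R : realFieldType) r (x : 'cV[R]_r) i : R := if x i 0 <= 0 then -1 else 1.

Lemma sgle_char (R : realFieldType) r (x y : 'cV[R]_r) :
  sign_le y x <-> forall i, 0 <= d1 x i * y i 0 /\ 0 <= d2 x i * y i 0.
Proof.
have cases : forall u : R, [/\ u < 0, (0 <= u) = false & (u <= 0) = true] \/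
   [/\ 0 < u, (0 <= u) = true & (u <= 0) = false] \/ [/\ u = 0, (0 <= u) = true & (u <= 0) = true].
  move=> u; case: (ltgtP u 0) => hu.
  - by left.
  - by right; left.
  - by right; right.
rewrite /d1 /d2; split.
  move=> h i; case: (h i) => [/eqP|].
    by rewrite sgr_eq0 => /eqP ->; rewrite !mulr0.
  case: (cases (x i 0)) => [[hx -> ->]|[[hx -> ->]|[hx -> ->]]].
  - rewrite (ltr0_sg hx) => /eqP; rewrite sgr_cp0 => hy.
    by rewrite !mulN1r oppr_ge0 ltW.
  - rewrite (gtr0_sg hx) => /eqP; rewrite sgr_cp0 => hy.
    by rewrite !mul1r ltW.
  - by rewrite hx sgr0 => /eqP; rewrite sgr_eq0 => /eqP ->; rewrite !mulr0.
move=> h i; have [h1 h2] := h i; move: h1 h2.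
case: (cases (y i 0)) => [[hy _ _]|[[hy _ _]|[hy _ _]]].
- case: (cases (x i 0)) => [[hx -> ->]|[[hx -> ->]|[hx -> ->]]].
  + by right; rewrite (ltr0_sg hx) (ltr0_sg hy).
  + by move=> h1 h2; exfalso; lra.
  + by move=> h1 h2; exfalso; lra.
- case: (cases (x i 0)) => [[hx -> ->]|[[hx -> ->]|[hx -> ->]]].
  + by move=> h1 h2; exfalso; lra.
  + by right; rewrite (gtr0_sg hx) (gtr0_sg hy).
  + by move=> h1 h2; exfalso; lra.
- by left; rewrite hy sgr0.
Qed.

Definition ff (R : realFieldType) m r (A : 'M[R]_(m,r)) (b : 'cV[R]_m) (x : 'cV[R]_r)
  (i : option ('I_m + ('I_r + 'I_r))) : 'rV[R]_(r + 1) :=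
  match i with
  | None => row_mx 0 (const_mx 1)
  | Some (inl j) => row_mx (row j A) (const_mx (- b j 0))
  | Some (inr (inl i)) => row_mx (d1 x i *: delta_mx 0 i) 0
  | Some (inr (inr i)) => row_mx (d2 x i *: delta_mx 0 i) 0
  end.

Lemma ev_lift (R : realFieldType) r (p : 'rV[R]_r) (q : 'rV[R]_1) (y : 'cV[R]_r) (t : R) :
  ((row_mx p q) *m col_mx y (const_mx t)) 0 0 = (p *m y) 0 0 + q 0 0 * t.
Proof. by rewrite mul_row_col mxE [X in _ + X]mxE big_ord1 [const_mx _ _ _]mxE. Qed.

Lemma delta_y (R : realFieldType) r (y : 'cV[R]_r) i : (delta_mx (0 : 'I_1) i *m y) 0 0 = y i 0.
Proof. by rewrite -rowE mxE. Qed.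

Lemma evff (R : realFieldType) m r (A : 'M[R]_(m,r)) (b : 'cV[R]_m) (x : 'cV[R]_r) (y : 'cV[R]_r) (t : R) :
  [/\ ev (ff A b x) None (col_mx y (const_mx t)) = t,
      forall j, ev (ff A b x) (Some (inl j)) (col_mx y (const_mx t)) = (A *m y) j 0 - b j 0 * t,
      forall i, ev (ff A b x) (Some (inr (inl i))) (col_mx y (const_mx t)) = d1 x i * y i 0 &
      forall i, ev (ff A b x) (Some (inr (inr i))) (col_mx y (const_mx t)) = d2 x i * y i 0].
Proof.
rewrite /ev /=; split.
- by rewrite ev_lift mul0mx !mxE mul1r add0r.
- by move=> j; rewrite ev_lift -row_mul !mxE mulNr.
- by move=> i; rewrite ev_lift -scalemxAl mxE delta_y mxE mul0r addr0.
- by move=> i; rewrite ev_lift -scalemxAl mxE delta_y mxE mul0r addr0.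
Qed.

Lemma Kchar (R : realFieldType) m r (A : 'M[R]_(m,r)) (b : 'cV[R]_m) (x : 'cV[R]_r) (y : 'cV[R]_r) (t : R) :
  inK (ff A b x) (col_mx y (const_mx t)) <->
  (forall j, b j 0 * t <= (A *m y) j 0) /\ sign_le y x /\ 0 <= t.
Proof.
have [e0 e1 e2 e3] := evff A b x y t.
rewrite sgle_char; split.
  move=> h; split; first by move=> j; have := h (Some (inl j)); rewrite e1 subr_ge0.
  split; last by have := h None; rewrite e0.
  by move=> i; rewrite -e2 -e3.
move=> [h1 [h2 h3]] k; case: k => [[j|[i|i]]|] /=.
- by rewrite e1 subr_ge0.
- by rewrite e2; case: (h2 i).
- by rewrite e3; case: (h2 i).
- by rewrite e0.
Qed.

Lemma zliftK (R : realFieldType) r (z : 'cV[R]_(r + 1)) :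
  z = col_mx (usubmx z) (const_mx (dsubmx z 0 0)).
Proof.
rewrite -{1}[z]vsubmxK; congr col_mx.
by apply/matrixP => i j; rewrite !ord1 !mxE.
Qed.

Lemma ff_pointed (R : realFieldType) m r (A : 'M[R]_(m,r)) (b : 'cV[R]_m) (x : 'cV[R]_r) :
  pointed (ff A b x).
Proof.
move=> z _ h; rewrite (zliftK z) in h *.
have [e0 _ e2 _] := evff A b x (usubmx z) (dsubmx z 0 0).
have := h None; rewrite e0 => ->.
have -> : usubmx z = 0.
  apply/matrixP => i j; rewrite ord1 [RHS]mxE; have := h (Some (inr (inl i))); rewrite e2 /d1.
  move=> /eqP; rewrite mulf_eq0 => /orP[|/eqP //].
  by case: ifP => _; rewrite ?oppr_eq0 oner_eq0.
by apply/matrixP => i j; rewrite !mxE; case: splitP => ? _; rewrite mxE.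
Qed.

Lemma sgle_trans (R : realFieldType) n (u v w : 'cV[R]_n) :
  sign_le u v -> sign_le v w -> sign_le u w.
Proof.
move=> h1 h2 i; case: (h1 i) => [->|->]; first by left.
case: (h2 i) => [->|->]; by [left|right].
Qed.

Lemma sgleZ (R : realFieldType) n (u v : 'cV[R]_n) al :
  0 < al -> sign_le u v -> sign_le (al *: u) v.
Proof. by move=> alp h i; rewrite mxE sgrM gtr0_sg // mul1r; apply: h. Qed.

Lemma sgle_refl (R : realFieldType) n (u : 'cV[R]_n) : sign_le u u.
Proof. by move=> i; right. Qed.

Lemma sg_pos (R : realFieldType) n (y : 'cV[R]_n) al i :
  y i 0 != 0 -> sign_le (al *: y) y -> al *: y != 0 -> 0 < al.
Proof.
move=> yi h nz; have al0 : al != 0 by apply: contraNneq nz => ->; rewrite scale0r.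
case: (h i); rewrite mxE.
  by move/eqP; rewrite sgr_eq0 mulf_eq0 (negbTE al0) (negbTE yi).
rewrite sgrM => /eqP; rewrite -subr_eq0 -{2}[Num.sg (y i 0)]mul1r -mulrBl mulf_eq0.
rewrite sgr_eq0 (negbTE yi) orbF subr_eq0 => /eqP.
by move/eqP; rewrite sgr_cp0.
Qed.

Lemma nz_entry (R : realFieldType) n (y : 'cV[R]_n) : y != 0 -> exists i, y i 0 != 0.
Proof.
move=> nz; apply: NNPP => H; move/eqP: nz; apply; apply/matrixP => i j.
rewrite ord1 mxE; apply: NNPP => H2; apply: H; exists i; exact/eqP.
Qed.

Lemma ff_nrm (R : realFieldType) m r (A : 'M[R]_(m,r)) (b : 'cV[R]_m) (x : 'cV[R]_r) v :
  extreme (ff A b x) v ->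
  exists2 al, 0 < al & (dsubmx (al *: v) 0 0 = 0 \/ dsubmx (al *: v) 0 0 = 1).
Proof.
move=> [Kv _].
have Kv' : inK (ff A b x) (col_mx (usubmx v) (const_mx (dsubmx v 0 0))) by rewrite -zliftK.
move/Kchar: Kv' => [_ [_ t0]].
have e : forall al, dsubmx (al *: v) 0 0 = al * dsubmx v 0 0.
  by move=> al; rewrite !mxE.
case: (ltgtP 0 (dsubmx v 0 0)) t0 => h t0'.
- by exists (dsubmx v 0 0)^-1; [rewrite invr_gt0 | right; rewrite e mulVf ?gt_eqF].
- by [].
- by exists 1; [| left; rewrite e -h mulr0].
Qed.

Lemma cND_of (R : realFieldType) m r (A : 'M[R]_(m,r)) (b : 'cV[R]_m) (x : 'cV[R]_r) y :
  extreme (ff A b x) (col_mx y (const_mx 0)) -> cND A y.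
Proof.
move=> [Kv [nv ext]].
have [h1 [h2 _]] := proj1 (Kchar A b x y 0) Kv.
have ny : y != 0.
  by apply: contraNneq nv => ->; rewrite col_mx0.
split.
  by move=> i; rewrite mxE; have := h1 i; rewrite mulr0.
split => // x1 x2 rc1 rc2 nz1 nz2 s1 s2 e.
have Kx : forall x', rcone A x' -> sign_le x' y -> inK (ff A b x) (col_mx x' (const_mx 0)).
  move=> x' rc s; apply/Kchar; split.
    by move=> j; rewrite mulr0; have := rc j; rewrite mxE.
  by split; [apply: sgle_trans s h2|].
have hsum : col_mx y (const_mx 0 : 'cV[R]_1) = col_mx x1 (const_mx 0) + col_mx x2 (const_mx 0).
  by rewrite add_col_mx -e; congr col_mx; apply/matrixP => i j; rewrite !mxE addr0.
have [al hal] := ext _ _ (Kx _ rc1 s1) (Kx _ rc2 s2) hsum.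
have ex1 : x1 = al *: y by move: hal; rewrite scale_col_mx => /eq_col_mx [].
have ex2 : x2 = (1 - al) *: y by rewrite scalerBl scale1r -ex1 e [x1 + x2]addrC addrK.
have [i yi] := nz_entry ny.
have alp : 0 < al by apply: (sg_pos yi); rewrite -ex1.
have alp' : 0 < 1 - al by apply: (sg_pos yi); rewrite -ex2.
exists (al / (1 - al)); first by rewrite divr_gt0.
by rewrite ex1 ex2 scalerA mulfVK // gt_eqF.
Qed.

Lemma ccND_of (R : realFieldType) m r (A : 'M[R]_(m,r)) (b : 'cV[R]_m) (x : 'cV[R]_r) y :
  extreme (ff A b x) (col_mx y (const_mx 1)) -> sign_le y x -> ccND A b y.
Proof.
move=> [Kv [nv ext]] syx.
have [h1 [h2 _]] := proj1 (Kchar A b x y 1) Kv.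
split.
  by move=> i; have := h1 i; rewrite mulr1.
move=> x1 x2 l P1 P2 s1 s2 l0 l1 e.
have Kx : forall x' (al : R), 0 <= al -> in_polyhedron A b x' -> sign_le x' y ->
    inK (ff A b x) (al *: col_mx x' (const_mx 1)).
  move=> x' al al0 P s; apply: inKZ => //; apply/Kchar; split.
    by move=> j; rewrite mulr1; apply: P.
  by split; [apply: sgle_trans s h2|].
have hsum : col_mx y (const_mx 1 : 'cV[R]_1) =
    l *: col_mx x1 (const_mx 1) + (1 - l) *: col_mx x2 (const_mx 1).
  rewrite !scale_col_mx add_col_mx -e; congr col_mx.
  by apply/matrixP => i j; rewrite !mxE !mulr1 addrC subrK.
have l1' : 0 <= 1 - l by rewrite subr_ge0 ltW.
have [al hal] := ext _ _ (Kx _ _ (ltW l0) P1 s1) (Kx _ _ l1' P2 s2) hsum.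
move: hal; rewrite !scale_col_mx => /eq_col_mx [ha hb].
have lal : l = al.
  by have := congr1 (fun M : 'M[R]_1 => M 0 0) hb; rewrite /= !mxE !mulr1.
have ex1 : x1 = y.
  by apply: (scalerI (negbT (gt_eqF l0))); rewrite ha lal.
have l1z : 1 - l != 0 by rewrite subr_eq0 (negbT (gt_eqF l1)).
rewrite ex1; have e' := e; rewrite ex1 in e'.
apply: (scalerI l1z); rewrite scalerBl scale1r {1}e'.
by rewrite addrAC subrr add0r.
Qed.

Lemma rankD_le (R : realFieldType) m n (A B : 'M[R]_(m, n)) :
  (\rank (A + B)%R <= \rank A + \rank B)%N.
Proof.
have h := addmx_sub_adds (submx_refl A) (submx_refl B).
apply: leq_trans (mxrankS h) _.
by case: (mxrank_adds_leqif A B).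
Qed.



Lemma rank_sum_le (R : realFieldType) n (I : finType) (P : pred I) (B : I -> 'M[R]_n) :
  (\rank (\sum_(i | P i) B i)%MS <= \sum_(i | P i) \rank (B i))%N.
Proof.
apply: (big_rec2 (fun (M : 'M[R]_n) k => \rank M <= k)%N); first by rewrite mxrank0.
move=> i M k _ h; apply: (@leq_trans (\rank (B i) + \rank M)%N).
  by case: (mxrank_adds_leqif (B i) M).
by rewrite leq_add2l.
Qed.

Lemma rank_zero_cols (R : realFieldType) k r (D : 'M[R]_(k, r)) (S : {set 'I_r}) :
  (forall i a, a \notin S -> D i a = 0) -> (\rank D <= #|S|)%N.
Proof.
move=> h; rewrite -mxrank_tr.
apply: leq_trans (_ : \rank (\sum_(a in S) <<row a D^T>>)%MS <= _)%N.
  apply: mxrankS; apply/row_subP => a.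
  case: (boolP (a \in S)) => aS.
    by apply: (sumsmx_sup a) => //; rewrite genmxE.
  have -> : row a D^T = 0 by apply/matrixP => i j; rewrite !mxE h.
  exact: sub0mx.
apply: leq_trans (rank_sum_le _ _) _.
rewrite -sum1_card; apply: leq_sum => a _.
by rewrite genmxE rank_leq_row.
Qed.

Lemma scale_const (R : realFieldType) m n (al t : R) :
  al *: (const_mx t : 'M[R]_(m, n)) = const_mx (al * t).
Proof. by apply/matrixP => i j; rewrite !mxE. Qed.

Theorem theorem3 (R : realFieldType) (m r : nat) (A : 'M[R]_(m, r)) (b : 'cV[R]_m)
    (x : 'cV[R]_r) :
  in_polyhedron A b x ->
  exists (E0 E1 : seq 'cV[R]_r) (lam : 'cV[R]_r -> R),
    uniq E0 /\ uniq E1 /\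
    (forall e, e \in E0 -> cND A e) /\
    (forall e, e \in E1 -> ccND A b e) /\
    (forall e, e \in E0 ++ E1 -> sign_le e x) /\
    (forall e, e \in E1 -> 0 <= lam e) /\
    \sum_(e <- E1) lam e = 1 /\
    x = \sum_(e <- E0) e + \sum_(e <- E1) lam e *: e /\
    (forall d, affdim (in_polyhedron A b) d -> (size (undup (E0 ++ E1)) <= d.+1)%N) /\
    (size (undup (E0 ++ E1)) <= #|supp x| + #|supp (A *m x)| + 1)%N.
Proof.
move=> Px.
pose f := ff A b x.
have Kz0 : inK f (col_mx x (const_mx 1 : 'cV[R]_1)).
  apply/Kchar; split; first by move=> j; rewrite mulr1; apply: Px.
  by split; [apply: sgle_refl | apply: ler01].
have [k [M [c [colM [cpos [z0e [kerM _]]]]]]] :=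
  @core _ _ _ f (fun v => dsubmx v 0 0 = 0 \/ dsubmx v 0 0 = 1) (@ff_pointed _ _ _ A b x)
     (fun v ev => ff_nrm ev) _ Kz0.
pose yv j := usubmx (col j M); pose tv j := dsubmx (col j M) 0 0.
have colE' : forall j, col j M = col_mx (yv j) (const_mx (tv j)) := fun j => zliftK _.
have extj : forall j, extreme f (col_mx (yv j) (const_mx (tv j))).
  by move=> j; rewrite -colE'; exact: (colM j).1.
have KM : forall j, (forall i, b i 0 * tv j <= (A *m yv j) i 0) /\ sign_le (yv j) x /\ 0 <= tv j.
  by move=> j; apply/Kchar; exact: (extj j).1.
have t01 : forall j, tv j = 0 \/ tv j = 1 := fun j => (colM j).2.
have t0 : forall j, tv j != 1 -> tv j = 0.
  by move=> j; case: (t01 j) => -> //; rewrite eqxx.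
have xsum : x = \sum_j c j 0 *: yv j.
  apply/matrixP => a a'; rewrite ord1 summxE.
  have := congr1 (fun z : 'cV_(r+1) => z (lshift 1 a) 0) z0e; rewrite /= col_mxEu => ->.
  by rewrite mxE; apply: eq_bigr => j _; rewrite !mxE mulrC.
have tsum : \sum_j c j 0 * tv j = 1.
  have := congr1 (fun z : 'cV_(r+1) => z (rshift r 0) 0) z0e; rewrite /= col_mxEd !mxE => ->.
  by apply: eq_bigr => j _; rewrite /tv !mxE mulrC.
have kinj : forall i j (al be : R), al *: col i M = be *: col j M -> i != j -> al = 0.
  move=> i j al be h ij.
  have hk : M *m (al *: delta_mx i 0 - be *: delta_mx j 0 : 'cV[R]_k) = 0.
    by rewrite mulmxBr -!scalemxAr -!colE h subrr.
  have := kerM _ hk; move/matrixP => /(_ i 0).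
  by rewrite !mxE !eqxx (negbTE ij) /= mulr1 mulr0 subr0.
have inj1 : forall i j, tv i = 1 -> tv j = 1 -> yv i = yv j -> i = j.
  move=> i j ti tj e; apply: NNPP => /eqP ij.
  have h : 1 *: col i M = 1 *: col j M by rewrite !scale1r !colE' ti tj e.
  by move: (kinj _ _ _ _ h ij) => /eqP; rewrite oner_eq0.
have inj0 : forall i j, tv i = 0 -> tv j = 0 -> c i 0 *: yv i = c j 0 *: yv j -> i = j.
  move=> i j ti tj e; apply: NNPP => /eqP ij.
  have h : c i 0 *: col i M = c j 0 *: col j M.
    by rewrite !colE' ti tj !scale_col_mx e !scale_const !mulr0.
  by move: (kinj _ _ _ _ h ij) => h0; move: (cpos i); rewrite h0 ltxx.
pose E0 := [seq c j 0 *: yv j | j <- enum 'I_k & tv j != 1].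
pose E1 := [seq yv j | j <- enum 'I_k & tv j == 1].
pose lam := fun e => \sum_(j | (tv j == 1) && (yv j == e)) c j 0.
have lamE : forall j, tv j = 1 -> lam (yv j) = c j 0.
  move=> j tj; rewrite /lam (big_pred1 j) // => i /=.
  apply/andP/eqP => [[/eqP ti /eqP e]|->]; [exact: inj1 | by rewrite tj !eqxx].
exists E0, E1, lam.
split.
  rewrite map_inj_in_uniq; first by rewrite filter_uniq // enum_uniq.
  move=> i j; rewrite !mem_filter => /andP[hi _] /andP[hj _]; apply: inj0; exact: t0.
split.
  rewrite map_inj_in_uniq; first by rewrite filter_uniq // enum_uniq.
  move=> i j; rewrite !mem_filter => /andP[/eqP hi _] /andP[/eqP hj _]; exact: inj1.
split.
  move=> e /mapP [j]; rewrite mem_filter => /andP [hj _] ->.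
  apply: (@cND_of _ _ _ A b x).
  have := extremeZ (cpos j) (extj j); rewrite (t0 _ hj) scale_col_mx scale_const mulr0.
  done.
split.
  move=> e /mapP [j]; rewrite mem_filter => /andP [hj _] ->.
  have := extj j; rewrite (eqP hj) => ex; exact: (ccND_of ex (KM j).2.1).
split.
  move=> e; rewrite mem_cat => /orP [] /mapP [j _ ->].
    by apply: sgleZ (cpos j) _; exact: (KM j).2.1.
  exact: (KM j).2.1.
split.
  by move=> e _; apply: sumr_ge0 => j _; apply: ltW.
split.
  rewrite big_map big_filter big_enum_cond /=.
  rewrite -[X in _ = X]tsum [RHS](bigID (fun j => tv j == 1)) /= [X in _ = _ + X]big1 ?addr0.
    by apply: eq_bigr => j /eqP tj; rewrite lamE // tj mulr1.
  by move=> j /t0 ->; rewrite mulr0.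
split.
  rewrite !big_map !big_filter !big_enum_cond /=.
  rewrite {1}xsum (bigID (fun j => tv j == 1)) addrC /=; congr (_ + _).
    by apply: eq_bigr => j /eqP tj; rewrite lamE.
have sz : (size (undup (E0 ++ E1)) <= k)%N.
  apply: leq_trans (size_undup _) _; rewrite size_cat !size_map !size_filter.
  have h := count_predC (fun j => tv j == 1) (enum 'I_k); rewrite size_enum_ord in h.
  by rewrite addnC; apply: eq_leq; exact: h.
have [j0 tj0] : exists j0, tv j0 = 1.
  apply: NNPP => H; move: tsum; rewrite big1; first by move/eqP; rewrite eq_sym oner_eq0.
  move=> j _.
  have : tv j != 1 by apply/eqP => e; apply: H; exists j.
  by move/t0 => ->; rewrite mulr0.
pose T := M^T.
have Tfree : row_free T.
  apply: inj_row_free => v h.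
  have : M *m v^T = 0 by rewrite -[M *m v^T]trmxK trmx_mul trmxK h trmx0.
  by move/kerM => h2; rewrite -[v]trmxK h2 trmx0.
pose tau : 'cV[R]_k := \col_j tv j.
pose Nm : 'M[R]_k := 1%:M - tau *m delta_mx 0 j0.
pose D0 := Nm *m T.
pose D : 'M[R]_(k, r) := lsubmx D0.
have D0E : forall i a, D0 i a = M a i - tv i * M a j0.
  move=> i a; rewrite /D0 /Nm mulmxBl mul1mx -mulmxA -rowE.
  by rewrite !mxE big_ord1 !mxE.
have tvE : forall j, M (rshift r 0) j = tv j by move=> j; rewrite /tv !mxE.
have yvE : forall j a, M (lshift 1 a) j = yv j a 0 by move=> j a; rewrite /yv !mxE.
have rsub0 : rsubmx D0 = 0.
  by apply/matrixP => i a; rewrite ord1 mxE D0E !tvE tj0 mulr1 subrr mxE.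
have hD0 : D0 = row_mx D 0 by rewrite -rsub0 hsubmxK.
have rkD : \rank D = \rank Nm.
  by rewrite -(rank_row_mx0 1 D) -hD0 /D0 mxrankMfree.
have rkN : (k <= \rank Nm + 1)%N.
  have e1 : (1%:M : 'M[R]_k) = Nm + tau *m delta_mx 0 j0 by rewrite /Nm subrK.
  have := mxrank1 R k; rewrite e1 => {1}<-.
  apply: leq_trans (rankD_le _ _) _; rewrite leq_add2l.
  exact: leq_trans (mxrankM_maxr _ _) (rank_leq_row _).
have DE : forall i a, D i a = yv i a 0 - tv i * yv j0 a 0.
  by move=> i a; rewrite mxE D0E !yvE.
split.
  move=> d [_ hd].
  pose u := fun i => if tv i == 1 then yv i else x + yv i.
  pose v := fun i => if tv i == 1 then yv j0 else x.
  have PS : forall i, in_polyhedron A b (u i) /\ in_polyhedron A b (v i).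
    move=> i; rewrite /u /v; case: ifP => [/eqP ti|/negbT /t0 ti].
      split=> a; [have := (KM i).1 a; rewrite ti mulr1 //|].
      by have := (KM j0).1 a; rewrite tj0 mulr1.
    split => // a; rewrite mulmxDr mxE; have := (KM i).1 a; rewrite ti mulr0 => h.
    have := Px a; lra.
  have Duv : \matrix_(i < k) (u i - v i)^T = D.
    apply/matrixP => i a; rewrite DE !mxE /u /v.
    by case: ifP => [/eqP ->|/negbT /t0 ->]; rewrite ?mxE; lra.
  have := hd k u v PS; rewrite Duv rkD => h.
  apply: leq_trans sz _; apply: leq_trans rkN _; by rewrite addn1 ltnS.
have hs : (\rank D <= #|supp x|)%N.
  apply: rank_zero_cols => i a; rewrite inE negbK => /eqP xa.
  have y0 : forall j, yv j a 0 = 0.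
    move=> j; case: ((KM j).2.1 a) => [/eqP|]; first by rewrite sgr_eq0 => /eqP.
    by rewrite xa sgr0 => /eqP; rewrite sgr_eq0 => /eqP.
  by rewrite DE !y0 mulr0 subr0.
apply: leq_trans sz _; apply: leq_trans rkN _; rewrite -rkD.
lia.
Qed.
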